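(* Let $A$ be a finite alphabet and let $\mathbf{w},\mathbf{w}'$ be infinite LSP words over $A$ such that $\mathbf{w}=f(\mathbf{w}')$ for a bLSP morphism $f$ on $A$. Let $q$ be the state $({\rm alph}(\mathbf{w}),f,F(\mathbf{w}))$ and let $q'$ be a state $({\rm alph}(\mathbf{w}'),g,F(\mathbf{w}'))$ where $g$ is any bLSP morphism on $A$ such that $\mathbf{w}'=g(\mathbf{w}'')$ for some infinite word $\mathbf{w}''$, and where $F(\mathbf{x})$ denotes the set of all 5-tuples $(a,b,c,\beta,\gamma)$ such that $\mathbf{x}$ has an $(a,b,c,\beta,\gamma)$-fragility. Then $(q,f,q')$ is a transition of the automaton ${\cal A}_{\rm bLSP}$.
   Context: A finite word $u$ is a left special factor of a word $w$ if there are distinct letters $x\neq y$ with $xu$ and $yu$ factors of $w$. A word is LSP if every left special factor of it is a prefix of it. A bLSP morphism on $A$ is an endomorphism $f$ of $A^*$ such that there is a letter $\alpha$ with $f(\alpha)=\alpha$ and, for every letter $\beta\neq\alpha$, there is a letter $\gamma$ with $f(\beta)=f(\gamma)\beta$; this $\alpha$ is unique and denoted ${\rm first}(f)$. For pairwise distinct letters $a,b,c$ and distinct letters $\beta\neq\gamma$, a finite word $u$ is an $(a,b,c,\beta,\gamma)$-fragility of an infinite word $\mathbf{x}$ if $ua$ is a prefix of $\mathbf{x}$ and $\beta ub$, $\gamma uc$ are factors of $\mathbf{x}$; $\mathbf{x}$ is $(a,b,c)$-fragile if it has an $(a,b,c,\beta,\gamma)$-fragility for some $\beta\neq\gamma$.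 A morphism $f$ is LSP $(a,b,c)$-breaking if for every $(a,b,c)$-fragile infinite LSP word $\mathbf{x}$, $f(\mathbf{x})$ is not LSP. ${\rm Fact}(X)$ is the set of factors of words in $X$, ${\rm pref}(w)$ the set of prefixes of $w$, ${\rm alph}(w)$ the set of letters of $w$. The automaton ${\cal A}_{\rm bLSP}$: states are triples $q=({\rm alph}(q),{\rm bLSP}(q),{\rm set}(q))$ with ${\rm alph}(q)\subseteq A$, ${\rm bLSP}(q)$ a bLSP morphism on $A$, ${\rm set}(q)\subseteq A^5$; input letters are bLSP morphisms on $A$. A triple $(q,f,q')$ is a transition iff: (1) $f={\rm bLSP}(q)$; (2) ${\rm alph}(q)={\rm alph}(f({\rm alph}(q')))$; (3) for every $(a,b,c,\beta,\gamma)\in{\rm set}(q')$, $f$ is not LSP $(a,b,c)$-breaking; (4) ${\rm set}(q)$ is exactly the set of 5-tuples $(a,b,c,\beta,\gamma)$ of letters of ${\rm alph}(q)$ with $a,b,c$ pairwise distinct, $\beta\neq\gamma$, and such that either (a) $a={\rm first}(f)$ and $\beta b,\gamma c\in{\rm Fact}(f({\rm alph}(q')))$, or (b) there exist letters $a',b',c'$ with $(a',b',c',\beta,\gamma)\in{\rm set}(q')$ and a word $x$ with $xa\in{\rm pref}(f(a')\alpha)$, $xb\in{\rm pref}(f(b')\alpha)$, $xc\in{\rm pref}(f(c')\alpha)$, where $\alpha={\rm first}(f)$. *)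

(* Defs.v *)
(* finite alphabet = finType, finite words = seq A,
   infinite words = nat -> A, morphisms of A^* = A -> seq A. *)
From mathcomp Require Import all_boot.
Set Implicit Arguments. Unset Strict Implicit. Unset Printing Implicit Defensive.

Section Words.
Variable A : finType.

Definition infword := nat -> A.
Definition morph := A -> seq A.

Definition mimage (f : morph) (u : seq A) : seq A := flatten (map f u).

Definition ipref (u : seq A) (y : infword) : Prop := u = mkseq y (size u).

Definition ifactor (u : seq A) (y : infword) : Prop :=
  exists i, u = mkseq (fun j => y (i + j)) (size u).

(* y = f(x) for an infinite word x: every f-image of a prefix of x is a prefix of y *)
Definition iimage (f : morph) (x y : infword) : Prop :=
  forall n, ipref (mimage f (mkseq x n)) y.

Definition ialph (y : infword) : A -> Prop := fun a => exists n, y n = a.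

Definition left_special (u : seq A) (y : infword) : Prop :=
  exists x z : A, x <> z /\ ifactor (x :: u) y /\ ifactor (z :: u) y.

Definition LSP (y : infword) : Prop :=
  forall u, left_special u y -> ipref u y.

Definition is_first_b (f : morph) (al : A) : bool :=
  (f al == [:: al]) &&
  [forall be, (be != al) ==> [exists ga, f be == f ga ++ [:: be]]].

Definition is_bLSP (f : morph) : Prop := exists al, is_first_b f al.

(* first(f) (unique when f is bLSP); None if f is not bLSP *)
Definition first (f : morph) : option A := [pick al | is_first_b f al].

Definition fragility (a b c be ga : A) (u : seq A) (x : infword) : Prop :=
  [/\ a <> b, a <> c, b <> c & be <> ga] /\
  [/\ ipref (rcons u a) x, ifactor (be :: rcons u b) x & ifactor (ga :: rcons u c) x].

Definition fragile (a b c : A) (x : infword) : Prop :=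
  exists be ga u, be <> ga /\ fragility a b c be ga u x.

Definition Fset (x : infword) : A * A * A * A * A -> Prop :=
  fun t => let: (a, b, c, be, ga) := t in exists u, fragility a b c be ga u x.

Definition LSP_breaking (f : morph) (a b c : A) : Prop :=
  forall x y : infword, fragile a b c x -> LSP x -> iimage f x y -> ~ LSP y.

Record state := State {
  st_alph : A -> Prop;
  st_bLSP : morph;
  st_set  : A * A * A * A * A -> Prop }.

Definition is_state (q : state) : Prop := is_bLSP (st_bLSP q).

Definition transition (q : state) (f : morph) (q' : state) : Prop :=
  [/\ is_state q, is_state q' &
   [/\ f = st_bLSP q,
   (forall a, st_alph q a <-> exists d, st_alph q' d /\ a \in f d),
   (forall a b c be ga, st_set q' (a, b, c, be, ga) -> ~ LSP_breaking f a b c)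
  & (forall a b c be ga, st_set q (a, b, c, be, ga) <->
       [/\ [/\ st_alph q a, st_alph q b, st_alph q c, st_alph q be & st_alph q ga],
           [/\ a <> b, a <> c, b <> c & be <> ga] &
           (first f = Some a /\
              (exists d, st_alph q' d /\ infix [:: be; b] (f d)) /\
              (exists d, st_alph q' d /\ infix [:: ga; c] (f d)))
           \/
           (exists a' b' c', st_set q' (a', b', c', be, ga) /\
              exists al, first f = Some al /\
              exists x : seq A, [/\ prefix (rcons x a) (f a' ++ [:: al]),
                                    prefix (rcons x b) (f b' ++ [:: al]) &
                                    prefix (rcons x c) (f c' ++ [:: al])])])]].

End Words.

(* Main.v *)
Require Import Defs.
From mathcomp Require Import all_boot.
Set Implicit Arguments. Unset Strict Implicit. Unset Printing Implicit Defensive.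

Section Aux.
Variable A : finType.
Variable f : morph A.
Variable al : A.
Hypothesis Hf : is_first_b f al.

Lemma fal : f al = [:: al].
Proof. by move: Hf => /andP[/eqP]. Qed.

Lemma fbe be : be != al -> exists ga, f be = f ga ++ [:: be].
Proof.
move: Hf => /andP[_ /forallP H] Hb.
by move: (H be); rewrite Hb /= => /existsP[ga /eqP E]; exists ga.
Qed.

Lemma fshape d : exists t, f d = al :: t /\ al \notin t.
Proof.
have: forall n d, size (f d) <= n -> exists t, f d = al :: t /\ al \notin t;
  last by apply; apply: leqnn.
elim=> [|n IH] e Hs.
  case: (eqVneq e al) => [E|ne]; first by move: Hs; rewrite E fal.
  by case: (fbe ne) => g E; move: Hs; rewrite E size_cat addn1.
case: (eqVneq e al) => [->|ne]; first by exists [::]; rewrite fal.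
case: (fbe ne) => g E.
have : size (f g) <= n by move: Hs; rewrite E size_cat addn1.
case/IH => t [Et Nt]; exists (t ++ [:: e]); rewrite E Et; split => //.
by rewrite mem_cat negb_or Nt mem_seq1 eq_sym ne.
Qed.

Lemma fsize d : 0 < size (f d).
Proof. by case: (fshape d) => t [-> _]. Qed.

Lemma fnth0 d : nth al (f d) 0 = al.
Proof. by case: (fshape d) => t [-> _]. Qed.

Lemma fnth_neq d j : 0 < j -> j < size (f d) -> nth al (f d) j != al.
Proof.
case: (fshape d) => t [-> Nt]; case: j => // j _ /= Hj.
by apply/eqP => E; move: Nt; rewrite -E mem_nth.
Qed.

Lemma flast d : last al (f d) = d.
Proof.
case: (eqVneq d al) => [->|ne]; first by rewrite fal.
by case: (fbe ne) => g ->; rewrite cats1 last_rcons.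
Qed.

Lemma finj : injective f.
Proof. by move=> d e E; rewrite -(flast d) -(flast e) E. Qed.

Lemma ffirst : first f = Some al.
Proof.
rewrite /first; case: pickP => [x Hx|H]; last by move: (H al); rewrite Hf.
case: (eqVneq x al) => [->//|ne]; exfalso.
move: Hx => /andP[/eqP E _]; case: (fbe ne) => g E2.
move: (congr1 size E2); rewrite E size_cat addn1 /= => [[]] H0.
by move: (fsize g); rewrite -H0.
Qed.
End Aux.

Section Fat.
Variable A : finType.
Variable al : A.

Definition fat (y : infword A) i (v : seq A) :=
  forall j, j < size v -> nth al v j = y (i + j).

Lemma ipref_fat v y : ipref v y <-> fat y 0 v.
Proof.
split => [E j Hj|H]; first by rewrite E nth_mkseq ?add0n // -E.
apply: (@eq_from_nth _ al); first by rewrite size_mkseq.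
by move=> j Hj; rewrite nth_mkseq // H.
Qed.

Lemma ifactor_fat v y : ifactor v y <-> exists i, fat y i v.
Proof.
split => [[i E]|[i H]].
  by exists i => j Hj; rewrite E nth_mkseq // -E.
exists i; apply: (@eq_from_nth _ al); first by rewrite size_mkseq.
by move=> j Hj; rewrite nth_mkseq // H.
Qed.

Lemma fat_prefix y i v v' : fat y i v -> prefix v' v -> fat y i v'.
Proof.
move=> H /prefixP[s E] j Hj; rewrite -H; last by rewrite E size_cat ltn_addr.
by rewrite E nth_cat Hj.
Qed.

Lemma fat_catl y i v1 v2 : fat y i (v1 ++ v2) -> fat y i v1.
Proof. by move=> H; apply: fat_prefix H _; apply: prefix_prefix. Qed.

Lemma fat_catr y i v1 v2 : fat y i (v1 ++ v2) -> fat y (i + size v1) v2.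
Proof.
move=> H j Hj; rewrite -addnA -H; last by rewrite size_cat ltn_add2l.
by rewrite nth_cat ltnNge leq_addr /= addKn.
Qed.

Lemma fat_cat y i v1 v2 : fat y i v1 -> fat y (i + size v1) v2 -> fat y i (v1 ++ v2).
Proof.
move=> H1 H2 j Hj; rewrite nth_cat; case: ltnP => Hl; first by rewrite H1.
rewrite H2; first by rewrite -addnA subnKC.
by rewrite ltn_subLR // -size_cat.
Qed.

Lemma fat_cons y i x v : y i = x -> fat y i.+1 v -> fat y i (x :: v).
Proof. by move=> E H [|j] /= Hj; rewrite ?addn0 // H // addnS. Qed.

Lemma fat_nth y i v j : fat y i v -> j < size v -> nth al v j = y (i + j).
Proof. by move=> H; apply: H. Qed.

Lemma mkseq_add (y : nat -> A) k M :
  mkseq y (k + M) = mkseq y k ++ mkseq (fun t => y (k + t)) M.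
Proof.
elim: M => [|M IH]; first by rewrite addn0 cats0.
by rewrite addnS !mkseqS IH rcons_cat.
Qed.

Lemma mimage_cat (f : morph A) s t : mimage f (s ++ t) = mimage f s ++ mimage f t.
Proof. by rewrite /mimage map_cat flatten_cat. Qed.

Lemma mimage1 (f : morph A) x : mimage f [:: x] = f x.
Proof. by rewrite /mimage /= cats0. Qed.

Lemma prefix_rcons_eq (x s : seq A) a b :
  prefix (rcons x a) s -> prefix (rcons x b) s -> a = b.
Proof.
rewrite !prefixE !size_rcons => /eqP -> /eqP E.
by case: (rcons_inj E).
Qed.
End Fat.

Section Blocks.
Variable A : finType.
Variable f : morph A.
Variable al : A.
Hypothesis Hf : is_first_b f al.
Variables w w' : infword A.
Hypothesis Hw : iimage f w' w.

Definition Sp n := size (mimage f (mkseq w' n)).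

Lemma S0 : Sp 0 = 0.
Proof. by []. Qed.

Lemma SS n : Sp n.+1 = Sp n + size (f (w' n)).
Proof. by rewrite /Sp mkseqS -cats1 mimage_cat mimage1 size_cat. Qed.

Lemma L1 k s : (forall t, t < size s -> nth al s t = w' (k + t)) ->
  fat al w (Sp k) (mimage f s ++ [:: al]).
Proof.
move=> H.
have Es : s = mkseq (fun t => w' (k + t)) (size s).
  by apply: (@eq_from_nth _ al); rewrite ?size_mkseq // => t Ht; rewrite nth_mkseq // H.
have := Hw (k + size s).+1; move/(ipref_fat al); rewrite mkseqS mkseq_add -Es -cats1 !mimage_cat mimage1.
case: (fshape Hf (w' (k + size s))) => t [-> _].
rewrite -catA => /fat_catr; rewrite add0n -/(Sp k) -(cat1s al t) catA => /fat_catl.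
done.
Qed.

Lemma Sblock n j : j <= size (f (w' n)) -> w (Sp n + j) = nth al (f (w' n) ++ [:: al]) j.
Proof.
move=> Hj; have H : fat al w (Sp n) (f (w' n) ++ [:: al]).
  by rewrite -(mimage1 f); apply: L1 => -[|t] //= _; rewrite addn0.
by rewrite H // size_cat addn1 ltnS.
Qed.

Lemma Sblock' n j : j < size (f (w' n)) -> w (Sp n + j) = nth al (f (w' n)) j.
Proof. by move=> Hj; rewrite Sblock ?nth_cat ?Hj // ltnW. Qed.

Lemma Sal n : w (Sp n) = al.
Proof. by rewrite -[Sp n]addn0 Sblock // nth_cat (fsize Hf) fnth0. Qed.

Lemma Sle n m : n <= m -> Sp n <= Sp m.
Proof.
move/subnKC => <-; elim: (m - n) => [|d IH]; first by rewrite addn0.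
by rewrite addnS SS (leq_trans IH) // leq_addr.
Qed.

Lemma Slt n m : n < m -> Sp n < Sp m.
Proof.
move=> H; apply: leq_trans (Sle H); rewrite SS -addn1 leq_add2l; exact: fsize Hf _.
Qed.

Lemma block_of i : exists n, Sp n <= i < Sp n.+1.
Proof.
elim: i => [|i [n /andP[H1 H2]]]; first by exists 0; rewrite S0 /= (Slt (ltnSn 0)).
case: (ltngtP i.+1 (Sp n.+1)) => Hi.
- by exists n; rewrite Hi andbT ltnW.
- by move: H2; rewrite ltnNge -ltnS Hi.
- by exists n.+1; rewrite Hi leqnn /= Slt.
Qed.

Lemma al_pos i : w i = al -> exists n, i = Sp n.
Proof.
case: (block_of i) => n /andP[H1 H2] E; exists n.
have Ei : i = Sp n + (i - Sp n) by rewrite subnKC.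
move: E H2; rewrite Ei; move: (i - Sp n) => j E H2.
have Hj : j < size (f (w' n)) by rewrite -(ltn_add2l (Sp n)) -SS.
move: E; rewrite Sblock' //.
case: (posnP j) => [-> _|Hp]; first by rewrite addn0.
by move/eqP; rewrite (negbTE (fnth_neq Hf Hp Hj)).
Qed.

Lemma Slast n : w (Sp n.+1).-1 = w' n.
Proof.
have Hs := fsize Hf (w' n).
have E : (Sp n.+1).-1 = Sp n + (size (f (w' n))).-1 by rewrite SS -!subn1 addnBA.
rewrite E Sblock'; last by rewrite prednK.
by rewrite nth_last flast.
Qed.

Lemma BU P d1 d2 :
  (forall j, j <= size (f d1) -> w (P + j) = nth al (f d1 ++ [:: al]) j) ->
  (forall j, j <= size (f d2) -> w (P + j) = nth al (f d2 ++ [:: al]) j) ->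
  d1 = d2.
Proof.
move=> H1 H2.
have key : forall e1 e2,
  (forall j, j <= size (f e1) -> w (P + j) = nth al (f e1 ++ [:: al]) j) ->
  (forall j, j <= size (f e2) -> w (P + j) = nth al (f e2 ++ [:: al]) j) ->
  size (f e1) < size (f e2) -> False.
  move=> e1 e2 G1 G2 Hl.
  have := G1 _ (leqnn _); rewrite nth_cat ltnn subnn /= (G2 _ (ltnW Hl)) nth_cat Hl => E.
  by move: (fnth_neq Hf (fsize Hf e1) Hl); rewrite E eqxx.
have Esz : size (f d1) = size (f d2).
  case: (ltngtP (size (f d1)) (size (f d2))) => // Hl; exfalso.
  - exact: key H1 H2 Hl.
  - exact: key H2 H1 Hl.
apply: (finj Hf); apply: (@eq_from_nth _ al) => // j Hj.
have Hj2 : j <= size (f d2) by rewrite -Esz ltnW.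
have := H1 j (ltnW Hj); rewrite (H2 j Hj2) !nth_cat Hj -Esz Hj => <-.
done.
Qed.

End Blocks.

Section Occ.
Variable A : finType.
Variable f : morph A.
Variable al : A.
Hypothesis Hf : is_first_b f al.
Variables w w' : infword A.
Hypothesis Hw : iimage f w' w.

Notation Sp := (Sp f w').

Lemma occ (u : seq A) m N k e :
  size u = m -> fat al w 0 u -> Sp N < m <= Sp N.+1 ->
  fat al w (Sp k) u -> w (Sp k + m) = e ->
  [/\ (forall t, t < N -> w' (k + t) = w' t), Sp (k + N) = Sp k + Sp N &
  prefix (rcons (drop (Sp N) u) e) (f (w' (k + N)) ++ [:: al])].
Proof.
move=> Hm H0 /andP[HN1 HN2] Hk He.
have Hin : forall p, p < m -> w (Sp k + p) = w p.
  by move=> p Hp; rewrite -Hk ?Hm // -[p]add0n -H0 ?Hm.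
have claim : forall t, t <= N -> Sp (k + t) = Sp k + Sp t /\
    (forall t', t' < t -> w' (k + t') = w' t').
  elim => [|t IH] Ht; first by split; rewrite ?addn0 // S0 addn0.
  case: (IH (ltnW Ht)) => E1 E2.
  have Hd : w' (k + t) = w' t.
    symmetry; apply: (BU Hf (w := w) (P := Sp (k + t))) => j Hj; last by rewrite (Sblock Hf Hw).
    rewrite E1 -addnA Hin; first by rewrite (Sblock Hf Hw).
    apply: leq_ltn_trans HN1; apply: leq_trans (Sle f w' Ht).
    by rewrite SS leq_add2l.
  split; first by rewrite addnS SS E1 Hd SS addnA.
  move=> t'; rewrite ltnS leq_eqVlt => /orP[/eqP ->|]; [exact: Hd | exact: E2].
case: (claim N (leqnn N)) => EN Ht; split => //.
set e2 := w' (k + N).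
have HmN : Sp N <= m by rewrite ltnW.
have Hsz : m - Sp N <= size (f e2).
  rewrite leqNgt; apply/negP => Hl.
  have := Sblock Hf Hw (n := k + N) (j := size (f e2)) (leqnn _).
  rewrite nth_cat ltnn subnn /= EN -addnA Hin; last by rewrite -ltn_subRL.
  have Hl2 : size (f e2) < size (f (w' N)).
    by rewrite -(ltn_add2l (Sp N)) -SS (leq_trans _ HN2) // -ltn_subRL.
  rewrite (Sblock' Hf Hw) // => E.
  by move: (fnth_neq Hf (fsize Hf e2) Hl2); rewrite E eqxx.
have Hsx : size (drop (Sp N) u) = m - Sp N by rewrite size_drop Hm.
rewrite prefixE; apply/eqP; apply: (@eq_from_nth _ al).
  by rewrite size_takel size_rcons // size_cat /= addn1 ltnS Hsx.
move=> j; rewrite size_takel; last by rewrite size_rcons size_cat /= addn1 ltnS Hsx.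
move=> Hj; rewrite nth_take // nth_rcons Hsx.
rewrite size_rcons Hsx ltnS leq_eqVlt in Hj.
case/orP: Hj => [/eqP ->|Hj].
  rewrite ltnn eqxx -He.
  have -> : Sp k + m = Sp (k + N) + (m - Sp N) by rewrite EN -addnA subnKC.
  by rewrite (Sblock Hf Hw).
rewrite Hj nth_drop.
have Hj2 : Sp N + j < m by rewrite -ltn_subRL.
rewrite (fat_nth H0) ?Hm // add0n -Hin // addnA -EN (Sblock Hf Hw) //.
by rewrite (leq_trans (ltnW Hj)).
Qed.

End Occ.

Lemma fat_rcons (A : finType) (al : A) y i u x :
  fat al y i (rcons u x) -> fat al y i u /\ y (i + size u) = x.
Proof.
move=> H; split; first by apply: (fat_catl (v2 := [:: x])); rewrite cats1.
by rewrite -(fat_nth H) ?size_rcons // nth_rcons ltnn eqxx.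
Qed.

Lemma fat_consE (A : finType) (al : A) y i u x :
  fat al y i (x :: u) -> y i = x /\ fat al y i.+1 u.
Proof.
move=> H; split; first by rewrite -[i]addn0 -(fat_nth H).
by move=> j Hj; rewrite addSnnS -(fat_nth H).
Qed.

Section Main.
Variable A : finType.
Variable f : morph A.
Variable al : A.
Hypothesis Hf : is_first_b f al.
Variables w w' : infword A.
Hypothesis Hw : iimage f w' w.

Notation Sp := (Sp f w').

Lemma fat_block n : fat al w (Sp n) (f (w' n)).
Proof.
by move=> j Hj; rewrite (Sblock' Hf Hw).
Qed.

Lemma pair_in_block i be b : w i = be -> w i.+1 = b -> b != al ->
  exists d, ialph w' d /\ infix [:: be; b] (f d).
Proof.
move=> Ebe Eb Nb.
case: (block_of Hf w' i) => n /andP[H1 H2].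
have H3 : i.+1 < Sp n.+1.
  rewrite ltn_neqAle H2 andbT; apply/eqP => E.
  by move: Nb; rewrite -Eb E (Sal Hf Hw) eqxx.
have Ei : i = Sp n + (i - Sp n) by rewrite subnKC.
move: Ebe Eb H3; rewrite Ei; move: (i - Sp n) => j Ebe Eb H3.
have Hj : j.+1 < size (f (w' n)) by rewrite -(ltn_add2l (Sp n)) -SS addnS.
rewrite (Sblock' Hf Hw) in Ebe; last by rewrite ltnW.
rewrite -addnS (Sblock' Hf Hw) // in Eb.
exists (w' n); split; first by exists n.
apply/infixP; exists (take j (f (w' n))), (drop j.+2 (f (w' n))).
rewrite -Ebe -Eb /= -(drop_nth al) // -(drop_nth al) ?cat_take_drop //.
exact: ltnW Hj.
Qed.

Lemma fat_mk k N z : (forall t, t < N -> w' (k + t) = w' t) -> w' (k + N) = z ->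
  fat al w' k (rcons (mkseq w' N) z).
Proof.
move=> H Hz j; rewrite size_rcons size_mkseq ltnS leq_eqVlt => /orP[/eqP ->|Hj].
  by rewrite nth_rcons size_mkseq ltnn eqxx.
by rewrite nth_rcons size_mkseq Hj nth_mkseq // H.
Qed.

Lemma frag_fwd a b c be ga u : fragility a b c be ga u w ->
  (first f = Some a /\
     (exists d, ialph w' d /\ infix [:: be; b] (f d)) /\
     (exists d, ialph w' d /\ infix [:: ga; c] (f d)))
  \/
  (exists a' b' c', Fset w' (a', b', c', be, ga) /\
     exists al0, first f = Some al0 /\
     exists x : seq A, [/\ prefix (rcons x a) (f a' ++ [:: al0]),
                           prefix (rcons x b) (f b' ++ [:: al0]) &
                           prefix (rcons x c) (f c' ++ [:: al0])]).
Proof.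
move=> [[Hab Hac Hbc Hbg] [Hp Hb Hc]].
move/(ipref_fat al): Hp => /fat_rcons[Hp Ha].
move/(ifactor_fat al): Hb => [i /fat_consE[Ebe /fat_rcons[Hb Eb]]].
move/(ifactor_fat al): Hc => [j /fat_consE[Ega /fat_rcons[Hc Ec]]].
have w0 : w 0 = al by rewrite -(S0 f w') (Sal Hf Hw).
case: u Hp Ha Hb Eb Hc Ec => [|u0 u1].
  move=> _ Ha _ Eb _ Ec; left.
  rewrite /= add0n w0 in Ha; subst a.
  rewrite /= addn0 in Eb; rewrite /= addn0 in Ec.
  split; first exact: ffirst Hf.
  split.
  - apply: (pair_in_block Ebe Eb); apply/eqP => E; apply: Hab; by rewrite E.
  - apply: (pair_in_block Ega Ec); apply/eqP => E; apply: Hac; by rewrite E.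
set u := u0 :: u1; move=> Hp Ha Hb Eb Hc Ec; right.
set m := size u.
have m0 : 0 < m by [].
have Eu0 : u0 = al by rewrite -w0 -[0]addn0 -(fat_nth Hp).
have HS : forall i, fat al w i.+1 u -> exists k, i.+1 = Sp k.+1 /\ w i = w' k /\ fat al w (Sp k.+1) u.
  move=> i' Hi'; have : w i'.+1 = al by rewrite -[i'.+1]addn0 -(fat_nth Hi').
  case/(al_pos Hf Hw) => [[|k] Ek]; first by rewrite S0 in Ek.
  exists k; split => //; split; last by rewrite -Ek.
  by rewrite -(Slast Hf Hw) -Ek.
case: (HS _ Hb) => k [Ek [Ebk Hbk]].
case: (HS _ Hc) => l [El [Egl Hcl]].
case: (block_of Hf w' m.-1) => N /andP[HN1 HN2].
have HN : Sp N < m <= Sp N.+1.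
  by move: HN1 HN2 m0; clearbody m; case: m => // m1 H1 H2 _; rewrite ltnS H1 H2.
have Hp0 : fat al w (Sp 0) u by rewrite S0.
case: (occ Hf Hw (erefl m) Hp HN Hp0 (e := a)) => [|_ _ Pa]; first by rewrite S0.
case: (occ Hf Hw (erefl m) Hp HN Hbk (e := b)) => [|Eb' _ Pb]; first by rewrite -Ek.
case: (occ Hf Hw (erefl m) Hp HN Hcl (e := c)) => [|Ec' _ Pc]; first by rewrite -El.
exists (w' (0 + N)), (w' (k.+1 + N)), (w' (l.+1 + N)); split.
  exists (mkseq w' N); split.
    split => // E.
    - by apply: Hab; apply: (prefix_rcons_eq Pa); rewrite E.
    - by apply: Hac; apply: (prefix_rcons_eq Pa); rewrite E.
    - by apply: Hbc; apply: (prefix_rcons_eq Pb); rewrite E.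
  split.
  - apply/(ipref_fat al); apply: fat_mk => //.
  - apply/(ifactor_fat al); exists k; apply: fat_cons; first by rewrite -Ebk Ebe.
    by apply: fat_mk.
  - apply/(ifactor_fat al); exists l; apply: fat_cons; first by rewrite -Egl Ega.
    by apply: fat_mk.
exists al; split; first exact: ffirst Hf.
by exists (drop (Sp N) u); split.
Qed.

End Main.

Section Back.
Variable A : finType.
Variable f : morph A.
Variable al : A.
Hypothesis Hf : is_first_b f al.
Variables w w' : infword A.
Hypothesis Hw : iimage f w' w.

Notation Sp := (Sp f w').

Lemma pair_fact be b d : ialph w' d -> infix [:: be; b] (f d) -> ifactor [:: be; b] w.
Proof.
move=> [n <-] /infixP[s1 [s2 E]].
apply/(ifactor_fat al); exists (Sp n + size s1).
have := fat_block Hf Hw (n := n); rewrite E => /fat_catr /fat_catl; done.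
Qed.

Lemma frag_bwd a b c be ga :
  [/\ a <> b, a <> c, b <> c & be <> ga] ->
  (first f = Some a /\
     (exists d, ialph w' d /\ infix [:: be; b] (f d)) /\
     (exists d, ialph w' d /\ infix [:: ga; c] (f d)))
  \/
  (exists a' b' c', Fset w' (a', b', c', be, ga) /\
     exists al0, first f = Some al0 /\
     exists x : seq A, [/\ prefix (rcons x a) (f a' ++ [:: al0]),
                           prefix (rcons x b) (f b' ++ [:: al0]) &
                           prefix (rcons x c) (f c' ++ [:: al0])]) ->
  exists u, fragility a b c be ga u w.
Proof.
move=> D [[Fa [[d1 [Hd1 I1]] [d2 [Hd2 I2]]]]|[a' [b' [c' [[u' Hu'] [al0 [F0 [x [Pa Pb Pc]]]]]]]]].
  have Ea : a = al by move: Fa; rewrite (ffirst Hf) => -[].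
  exists [::]; split => //; split => /=.
  - apply/(ipref_fat al) => -[|j] //= _.
    by rewrite Ea -(S0 f w') (Sal Hf Hw).
  - exact: pair_fact I1.
  - exact: pair_fact I2.
have Eal : al0 = al by move: F0; rewrite (ffirst Hf) => -[].
subst al0.
move: Hu' => [_ [Hp Hb Hc]].
have key : forall (k : nat) (z y : A), fat al w' k (rcons u' z) -> prefix (rcons x y) (f z ++ [:: al]) ->
    fat al w (Sp k) (rcons (mimage f u' ++ x) y).
  move=> k z y H P.
  have := L1 Hf Hw (k := k) (s := rcons u' z) (fun t Ht => fat_nth H Ht).
  rewrite -cats1 mimage_cat mimage1 -catA => H2.
  apply: fat_prefix H2 _; rewrite rcons_cat prefix_catr // eqxx; exact: P.
have posS : forall k, 0 < Sp k.+1.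
  by move=> k; rewrite SS (leq_trans (fsize Hf (w' k))) // leq_addl.
exists (mimage f u' ++ x); split => //; split.
- apply/(ipref_fat al); rewrite -(S0 f w'); apply: key Pa => //.
  by apply/(ipref_fat al).
- move/(ifactor_fat al): Hb => [i /fat_consE[Ebe Hb]].
  apply/(ifactor_fat al); exists (Sp i.+1).-1; apply: fat_cons.
    by rewrite (Slast Hf Hw).
  rewrite prednK //; exact: key Hb Pb.
- move/(ifactor_fat al): Hc => [i /fat_consE[Ebe Hc]].
  apply/(ifactor_fat al); exists (Sp i.+1).-1; apply: fat_cons.
    by rewrite (Slast Hf Hw).
  rewrite prednK //; exact: key Hc Pc.
Qed.

End Back.

Unset Implicit Arguments.

Theorem lemma5 (A : finType) (w w' : infword A) (f : morph A) :
  LSP w -> LSP w' -> is_bLSP f -> iimage f w' w ->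
  forall (g : morph A) (w'' : infword A),
    is_bLSP g -> iimage g w'' w' ->
    transition (State (ialph w) f (Fset w)) f (State (ialph w') g (Fset w')).
Proof.
move=> Lw Lw' [al Hf] Hw g w'' Hg _.
split => //; first by exists al.
split => //=.
- move=> a; split.
  + case=> i <-; case: (block_of Hf w' i) => n /andP[H1 H2].
    exists (w' n); split; first by exists n.
    have Ei : i = Sp f w' n + (i - Sp f w' n) by rewrite subnKC.
    have Hj : i - Sp f w' n < size (f (w' n)).
      by rewrite -(ltn_add2l (Sp f w' n)) -Ei -SS.
    by rewrite Ei (Sblock' Hf Hw Hj) mem_nth.
  + case=> d [[n <-] Ha]; exists (Sp f w' n + index a (f (w' n))).
    by rewrite (Sblock' Hf Hw) ?index_mem // nth_index.
- move=> a b c be ga [u Hu] HB; apply: (HB w' w) => //.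
  by exists be, ga, u; split => //; case: Hu => -[].
- move=> a b c be ga; split.
  + case=> u Hu; split.
    * case: Hu => _ [Hp Hb Hc].
      move/(ipref_fat al): Hp => /fat_rcons[_ Ha].
      move/(ifactor_fat al): Hb => [i /fat_consE[Ebe /fat_rcons[_ Eb]]].
      move/(ifactor_fat al): Hc => [j /fat_consE[Ega /fat_rcons[_ Ec]]].
      by split; eexists; eassumption.
    * by case: Hu.
    * exact (frag_fwd Hf Hw Hu).
  + case=> _ D H; exact (frag_bwd Hf Hw D H).
Qed.
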